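(* For every formula $\varphi$, path $\pi$, avoiding function $\eta$ and $i\in\mathbb{N}$, the sequence $\big((\pi^i\models\mathcal{L}_t\varphi)\big)_{t\in\mathbb{N}}$ is nonincreasing and converges to $(\pi^i\models\mathcal{G}\varphi)$. Moreover, for every $t\in\mathbb{N}$, $$(\pi^i\models\mathcal{G}_t\varphi)\le(\pi^i\models\mathcal{L}_t\varphi)\le(\pi^i\models\mathcal{AG}_t\varphi).$$
   Context: Fix an interpretation of the connectives: a t-norm $\otimes$ and a t-conorm $\oplus$ on $[0,1]$ (commutative, associative binary operations, nondecreasing in each argument, with neutral element $1$ resp. $0$; $\otimes$ continuous), a negation and an implication. An avoiding function is $\eta:\mathbb{Z}\to[0,1]$ with $\eta(k)=1$ for $k\le0$, such that for some $n_\eta\in\mathbb{N}$, $\eta$ is strictly decreasing on $\{0,\dots,n_\eta\}$ and $\eta(k)=0$ for $k\ge n_\eta$. A linear time structure is $(S,s_0,\pi,L)$ with $\pi\in S^\omega$ and fuzzy labeling $L:S\to[0,1]^{AP}$; $\pi^i$ is the suffix from position $i$, and truth degrees $(\pi^i\models\varphi)\in[0,1]$ are defined recursively. $(\pi^i\models\mathcal{G}_t\varphi)=\bigotimes_{j=i}^{i+t}(\pi^j\models\varphi)$, $(\pi^i\models\mathcal{G}\varphi)=\lim_{t\to\infty}(\pi^i\models\mathcal{G}_t\varphi)$. With $I_t=\{0,\dots,t\}$, $(\pi^i\models\mathcal{AG}_t\varphi)=\max_{j\in I_t}\max_{H\subseteq I_t,|H|=t+1-j}\big(\bigotimes_{h\in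 H}(\pi^{i+h}\models\varphi)\big)\cdot\eta(j)$. The ''lasts'' operator is $(\pi^i\models\mathcal{L}_t\varphi)=\max_{0\le j\le\min\{t,n_\eta-1\}}(\pi^i\models\mathcal{G}_{t-j}\varphi)\cdot\eta(j)$; here $\cdot$ is ordinary multiplication. *)

(* Defs.v *)
From Stdlib Require Import Reals Lra Lia ZArith List.
Open Scope R_scope.

Definition in01 (x : R) : Prop := 0 <= x <= 1.

(* A t-norm on [0,1] (represented as a function R -> R -> R whose
   behaviour is only constrained on [0,1]). *)
Definition is_tnorm (tn : R -> R -> R) : Prop :=
  (forall x y, in01 x -> in01 y -> in01 (tn x y)) /\
  (forall x y, in01 x -> in01 y -> tn x y = tn y x) /\
  (forall x y z, in01 x -> in01 y -> in01 z -> tn x (tn y z) = tn (tn x y) z) /\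
  (forall x x' y, in01 x -> in01 x' -> in01 y -> x <= x' -> tn x y <= tn x' y) /\
  (forall x y y', in01 x -> in01 y -> in01 y' -> y <= y' -> tn x y <= tn x y') /\
  (forall x, in01 x -> tn x 1 = x) /\
  (forall x y, in01 x -> in01 y -> forall eps, eps > 0 -> exists del, del > 0 /\
     forall x' y', in01 x' -> in01 y' -> Rabs (x' - x) < del -> Rabs (y' - y) < del ->
       Rabs (tn x' y' - tn x y) < eps).

(* Avoiding function eta : Z -> [0,1] with witness n = n_eta. *)
Definition avoiding (eta : Z -> R) (n : nat) : Prop :=
  (forall k, in01 (eta k)) /\
  (forall k, (k <= 0)%Z -> eta k = 1) /\
  (forall a b : nat, (a < b <= n)%nat -> eta (Z.of_nat b) < eta (Z.of_nat a)) /\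
  (forall k, (Z.of_nat n <= k)%Z -> eta k = 0).

(* deg j stands for the truth degree (pi^j |= phi). *)

(* (pi^i |= G_t phi) = tn_{j=i}^{i+t} (pi^j |= phi) *)
Fixpoint Gt (tn : R -> R -> R) (deg : nat -> R) (i t : nat) : R :=
  match t with
  | O => deg i
  | S t' => tn (Gt tn deg i t') (deg (i + S t')%nat)
  end.

Definition tn_list (tn : R -> R -> R) (deg : nat -> R) (i : nat) (H : list nat) : R :=
  fold_right (fun h acc => tn (deg (i + h)%nat) acc) 1 H.

(* all sublists (= all subsets, for a duplicate-free list) *)
Fixpoint sublists (l : list nat) : list (list nat) :=
  match l with
  | nil => nil :: nil
  | x :: r => map (cons x) (sublists r) ++ sublists r
  end.

(* maximum of a nonempty list of nonnegative reals *)
Definition maxl (l : list R) : R := fold_right Rmax 0 l.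

(* (pi^i |= AG_t phi) = max_{j in I_t} max_{H subset I_t, |H| = t+1-j}
                          (tn_{h in H} (pi^{i+h} |= phi)) * eta j *)
Definition AGt (tn : R -> R -> R) (eta : Z -> R) (deg : nat -> R) (i t : nat) : R :=
  maxl (flat_map (fun j =>
          map (fun H => tn_list tn deg i H * eta (Z.of_nat j))
              (filter (fun H => Nat.eqb (length H) (t + 1 - j))
                      (sublists (seq 0 (S t)))))
        (seq 0 (S t))).

(* (pi^i |= L_t phi) = max_{0 <= j <= min(t, n_eta - 1)} (pi^i |= G_{t-j} phi) * eta j *)
Definition Lt (tn : R -> R -> R) (eta : Z -> R) (n : nat) (deg : nat -> R) (i t : nat) : R :=
  maxl (map (fun j => Gt tn deg i (t - j) * eta (Z.of_nat j))
            (seq 0 (S (Nat.min t (n - 1))))).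

(* Main.v *)
Require Import Defs.
From Stdlib Require Import Reals ZArith List Lra Lia.
Open Scope R_scope.

Lemma maxl_ub : forall l x, In x l -> x <= maxl l.
Proof.
  induction l as [|a l IH]; simpl; intros x H; [contradiction|].
  unfold maxl; simpl. destruct H as [<-|H].
  - apply Rmax_l.
  - eapply Rle_trans; [apply IH; exact H| apply Rmax_r].
Qed.

Lemma maxl_lub : forall l M, 0 <= M -> (forall x, In x l -> x <= M) -> maxl l <= M.
Proof.
  induction l as [|a l IH]; intros M HM H; unfold maxl; simpl; [lra|].
  apply Rmax_lub; [apply H; left; auto|]. apply IH; auto. intros; apply H; right; auto.
Qed.

Lemma maxl_ge0 : forall l, 0 <= maxl l.
Proof. induction l; unfold maxl; simpl; [lra|]. eapply Rle_trans; [apply IHl|apply Rmax_r]. Qed.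

Section S.
Variables (tn : R -> R -> R) (eta : Z -> R) (n : nat) (deg : nat -> R).
Hypothesis Htn : is_tnorm tn.
Hypothesis Heta : avoiding eta n.
Hypothesis Hdeg : forall j, in01 (deg j).

Lemma Gt_in01 : forall i t, in01 (Gt tn deg i t).
Proof.
  destruct Htn as [H1 _]. intros i t; induction t; simpl; auto.
Qed.

Lemma Gt_S : forall i t, Gt tn deg i (S t) <= Gt tn deg i t.
Proof.
  destruct Htn as [H1 [H2 [H3 [H4 [H5 [H6 H7]]]]]].
  intros i t; simpl. rewrite <- (H6 (Gt tn deg i t)) at 2 by apply Gt_in01.
  apply H5; auto. apply Gt_in01. split; lra. apply Hdeg.
Qed.

Lemma Gt_anti : forall i k m, (k <= m)%nat -> Gt tn deg i m <= Gt tn deg i k.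
Proof.
  intros i k m H; induction H; [lra|]. eapply Rle_trans; [apply Gt_S|auto].
Qed.

Lemma tn_list_in01 : forall i l, in01 (tn_list tn deg i l).
Proof.
  destruct Htn as [H1 _]. intros i; induction l; simpl; [unfold in01; lra|].
  apply H1; auto.
Qed.

Lemma tn_list_app : forall i l x,
  tn_list tn deg i (l ++ x :: nil) = tn (tn_list tn deg i l) (deg (i + x)%nat).
Proof.
  destruct Htn as [H1 [H2 [H3 [H4 [H5 [H6 H7]]]]]].
  intros i l x; induction l as [|a l IH]; simpl.
  - rewrite H6 by auto. rewrite H2; [|unfold in01; lra|auto]. rewrite H6; auto.
  - rewrite IH. apply H3; auto. apply tn_list_in01.
Qed.

Lemma tn_list_seq : forall i m, tn_list tn deg i (seq 0 (S m)) = Gt tn deg i m.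
Proof.
  destruct Htn as [H1 [H2 [H3 [H4 [H5 [H6 H7]]]]]].
  intros i m; induction m.
  - simpl. rewrite Nat.add_0_r. apply H6; auto.
  - rewrite seq_S. rewrite tn_list_app. simpl Gt. rewrite IHm. reflexivity.
Qed.

End S.

Lemma nil_sub : forall l, In nil (sublists l).
Proof. induction l; simpl; auto. apply in_or_app; right; auto. Qed.

Lemma firstn_sub : forall l k, In (firstn k l) (sublists l).
Proof.
  induction l as [|a l IH]; intros [|k]; simpl; auto.
  - apply in_or_app; right; apply nil_sub.
  - apply in_or_app; left. apply in_map; auto.
Qed.

Lemma firstn_seq' : forall m a k, (k <= m)%nat -> firstn k (seq a m) = seq a k.
Proof.
  induction m; intros a k H.
  - assert (k = 0)%nat by lia; subst; reflexivity.
  - destruct k; simpl; auto. f_equal. apply IHm; lia.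
Qed.

Theorem proposition9 (tn : R -> R -> R) (eta : Z -> R) (n : nat) (deg : nat -> R) (i : nat)
  (Htn : is_tnorm tn) (Heta : avoiding eta n) (Hdeg : forall j, in01 (deg j)) :
  (forall t, Lt tn eta n deg i (S t) <= Lt tn eta n deg i t) /\
  (exists l, Un_cv (fun t => Gt tn deg i t) l /\ Un_cv (fun t => Lt tn eta n deg i t) l) /\
  (forall t, Gt tn deg i t <= Lt tn eta n deg i t /\ Lt tn eta n deg i t <= AGt tn eta deg i t).
Proof.
  destruct Heta as [E1 [E2 [E3 E4]]].
  assert (Hn : (1 <= n)%nat).
  { destruct n; [|lia]. exfalso. assert (h1 := E2 0%Z ltac:(lia)).
    assert (h2 := E4 0%Z ltac:(simpl; lia)). lra. }
  assert (Gin := Gt_in01 tn deg Htn Hdeg i).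
  assert (Ge0 : forall t, 0 <= Gt tn deg i t) by (intro t; apply Gin).
  assert (eta0 : eta (Z.of_nat 0) = 1) by (apply E2; lia).
  assert (Hle : forall t, Gt tn deg i t <= Lt tn eta n deg i t).
  { intro t. unfold Lt. apply Rle_trans with (Gt tn deg i (t - 0) * eta (Z.of_nat 0)).
    - rewrite eta0, Nat.sub_0_r. lra.
    - apply maxl_ub. apply (in_map (fun j => Gt tn deg i (t - j) * eta (Z.of_nat j))).
      apply in_seq. lia. }
  assert (Hup : forall t, Lt tn eta n deg i t <= Gt tn deg i (t - (n - 1))).
  { intro t. unfold Lt. apply maxl_lub; [apply Ge0|].
    intros x Hx. apply in_map_iff in Hx. destruct Hx as [j [<- Hj]].
    apply in_seq in Hj.
    assert (h := E1 (Z.of_nat j)). destruct h.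
    apply Rle_trans with (Gt tn deg i (t - j) * 1).
    - apply Rmult_le_compat_l; auto.
    - rewrite Rmult_1_r. apply Gt_anti; auto. lia. }
  split; [|split].
  - intro t. unfold Lt at 1. apply maxl_lub; [apply maxl_ge0|].
    intros x Hx. apply in_map_iff in Hx. destruct Hx as [j [<- Hj]].
    apply in_seq in Hj. destruct j as [|j].
    + rewrite eta0, !Nat.sub_0_r. eapply Rle_trans; [|apply Hle]. rewrite Rmult_1_r.
      apply Gt_S; auto.
    + unfold Lt. eapply Rle_trans; [|apply maxl_ub].
      2:{ apply (in_map (fun j => Gt tn deg i (t - j) * eta (Z.of_nat j)) _ j).
          apply in_seq. lia. }
      replace (S t - S j)%nat with (t - j)%nat by lia.
      apply Rmult_le_compat_l; auto. left. apply E3. lia.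
  - destruct (decreasing_cv (fun t => Gt tn deg i t)) as [l Hl].
    + intro t. apply Gt_S; auto.
    + exists 0. intros x [k ->]. unfold opp_seq. specialize (Ge0 k). lra.
    + exists l. split; auto. intros eps Heps. destruct (Hl eps Heps) as [N HN].
      exists (N + n)%nat. intros t Ht. unfold R_dist in *.
      assert (a := HN t ltac:(lia)). assert (b := HN (t - (n-1))%nat ltac:(lia)).
      assert (c := Hle t). assert (d := Hup t).
      apply Rabs_def2 in a. apply Rabs_def2 in b. apply Rabs_def1; lra.
  - intro t. split; auto. unfold Lt. apply maxl_lub; [apply maxl_ge0|].
    intros x Hx. apply in_map_iff in Hx. destruct Hx as [j [<- Hj]].
    apply in_seq in Hj. apply maxl_ub. apply in_flat_map. exists j. split.
    + apply in_seq. lia.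
    + rewrite <- (tn_list_seq tn deg Htn Hdeg i (t - j)).
      apply (in_map (fun H => tn_list tn deg i H * eta (Z.of_nat j))).
      apply filter_In. split.
      * rewrite <- (firstn_seq' (S t) 0 (S (t - j))) by lia. apply firstn_sub.
      * rewrite length_seq. apply Nat.eqb_eq. lia.
Qed.
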